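(* Let $C$ be an independent set of the Kneser graph of flags of type $\{2,3\}$ of $\mathrm{PG}(6,q)$ and let $\xi\in\mathbb{N}$ be such that every solid of $\mathrm{PG}(6,q)$ occurs in at most $\xi$ flags of $C$. Let $(E,S)\in C$. Then there are at most $$(q^2+q+1)\begin{bmatrix}5\\2\end{bmatrix}_q\xi=(q^8+2q^7+4q^6+5q^5+6q^4+5q^3+4q^2+2q+1)\xi$$ flags $(E',S')\in C$ with $E'\cap E=\emptyset$ and $S'\cap E\neq\emptyset$.
   Context: Dimensions are projective (planes 2, solids 3). A flag of type $\{2,3\}$ is a pair $(E,S)$ of a plane $E$ and a solid $S$ with $E\subseteq S$; in the Kneser graph distinct flags $(E,S),(E',S')$ are adjacent iff $E\cap S'=\emptyset$ and $E'\cap S=\emptyset$. $\begin{bmatrix}5\\2\end{bmatrix}_q=\frac{(q^5-1)(q^4-1)}{(q^2-1)(q-1)}$. *)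

(* Defs.v *)
(* PG(6,q) = projective geometry of the vector space F^7, F a finite field with q elements. *)
From mathcomp Require Import all_boot all_algebra all_field.
Set Implicit Arguments. Unset Strict Implicit. Unset Printing Implicit Defensive.
Import GRing.Theory.

Definition V7 (F : finFieldType) := 'rV[F]_7.

(* A flag of type {2,3}: (E,S) with E a projective plane (vector dim 3),
   S a projective solid (vector dim 4), E contained in S. *)
Definition flag (F : finFieldType) := ({vspace V7 F} * {vspace V7 F})%type.

Definition is_flag (F : finFieldType) (f : flag F) : bool :=
  [&& \dim f.1 == 3, \dim f.2 == 4 & (f.1 <= f.2)%VS].

(* Adjacency in the Kneser graph: distinct flags with E ∩ S' = ∅ and E' ∩ S = ∅
   (projectively empty = trivial vector intersection). *)
Definition kneser_adj (F : finFieldType) (f g : flag F) : bool :=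
  [&& f != g, (f.1 :&: g.2 == 0)%VS & (g.1 :&: f.2 == 0)%VS].

Definition kneser_independent (F : finFieldType) (C : seq (flag F)) : Prop :=
  [/\ uniq C, all (@is_flag F) C &
      forall f g, f \in C -> g \in C -> ~~ kneser_adj f g].

Definition gauss52 (q : nat) : nat :=
  ((q ^ 5 - 1) * (q ^ 4 - 1)) %/ ((q ^ 2 - 1) * (q - 1)).

(* Main.v *)
Require Import Defs.
From mathcomp Require Import all_boot all_algebra all_field.
From mathcomp Require Import ring.

Module M_p1.
Import GRing.Theory.
Local Open Scope ring_scope.

Lemma exists_cubic (F : finFieldType) :
  exists c : F * F * F, forall a : F, a ^+ 3 + c.2 * a ^+ 2 + c.1.2 * a + c.1.1 != 0.
Proof.
case: (boolP [exists c : F * F * F, [forall a : F, a ^+ 3 + c.2 * a ^+ 2 + c.1.2 * a + c.1.1 != 0]]).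
  by move=> /existsP [c /forallP Hc]; exists c.
rewrite negb_exists => /forallP H.
have Hr c : exists a : F, a ^+ 3 + c.2 * a ^+ 2 + c.1.2 * a + c.1.1 == 0.
  by have := H c; rewrite negb_forall => /existsP [a]; rewrite negbK; exists a.
pose phi (t : F * F * F) : F * F * F :=
  let: (a, b0, b1) := t in (- (a * b0), b0 - a * b1, b1 - a).
pose rt c := xchoose (Hr c).
pose g (c : F * F * F) : F * F * F :=
  let a := rt c in (a, c.1.2 + a * (c.2 + a), c.2 + a).
have gK : cancel g phi.
  case=> [[c0 c1] c2]; rewrite /g /phi /=.
  have := xchooseP (Hr (c0, c1, c2)); rewrite -/(rt _) /=.
  set a := rt _ => /eqP ha.
  congr (_, _, _); last by rewrite addrK.
    apply/eqP; rewrite -subr_eq0 -oppr_eq0 -[X in _ == X]ha; apply/eqP; ring.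
  ring.
have ginj := can_inj gK.
have [h gh hg] := injF_bij ginj.
have E : h (0, 0, -1) = h (1, 0, 0).
  by rewrite -[h (0,0,-1)]gK -[h (1,0,0)]gK !hg /phi; congr (_,_,_); ring.
have := congr1 g E; rewrite !hg => -[] /eqP; rewrite eq_sym oner_eq0.
by [].
Qed.

End M_p1.
Import M_p1.

Module M_p2.
Import GRing.Theory.
Local Open Scope ring_scope.

Section Cub.
Variable F : fieldType.

Lemma size2_root {d : {poly F}} : size d = 2%N -> exists a, root d a.
Proof.
move=> sd; have d1 : d`_1 != 0.
  by have := lead_coef_eq0 d; rewrite lead_coefE sd /= => ->; rewrite -size_poly_eq0 sd.
exists (- d`_0 / d`_1); rewrite /root horner_coef sd !big_ord_recr big_ord0 /=.
by rewrite expr0 expr1 mulr1 add0r mulrC divfK // subrr.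
Qed.

Variables c0 c1 c2 : F.
Hypothesis noroot : forall a : F, a ^+ 3 + c2 * a ^+ 2 + c1 * a + c0 != 0.

Definition cubp : {poly F} := 'X^3 + c2 *: 'X^2 + c1 *: 'X + c0%:P.

Lemma cubp_noroot a : ~~ root cubp a.
Proof. rewrite /root /cubp !hornerE; apply: contra (noroot a) => /eqP <-; apply/eqP; rewrite /=; ring. Qed.

Lemma size_cubp : size cubp = 4%N.
Proof.
rewrite /cubp -addrA -addrA size_addl size_polyXn //.
apply: (leq_ltn_trans (size_add _ _)); rewrite gtn_max.
rewrite (leq_ltn_trans (size_scale_leq _ _)) ?size_polyXn //=.
apply: (leq_ltn_trans (size_add _ _)); rewrite gtn_max.
rewrite (leq_ltn_trans (size_scale_leq _ _)) ?size_polyX //=.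
by rewrite (leq_ltn_trans (size_polyC_leq1 _)).
Qed.

Lemma cubp_neq0 : cubp != 0.
Proof. by rewrite -size_poly_eq0 size_cubp. Qed.

Lemma cubp_coprime (Y : {poly F}) : Y != 0 -> (size Y <= 3)%N -> coprimep cubp Y.
Proof.
move=> Y0 sY; rewrite /coprimep.
set d := gcdp cubp Y.
have dp : d %| cubp := dvdp_gcdl _ _.
have dY : d %| Y := dvdp_gcdr _ _.
have sd : (size d <= 3)%N := leq_trans (dvdp_leq Y0 dY) sY.
have d0 : d != 0.
  by apply: contraNneq cubp_neq0 => E; move: dp; rewrite E dvd0p.
have sd1 : (0 < size d)%N by rewrite size_poly_gt0.
have noroot_d e : e %| cubp -> size e = 2%N -> False.
  move=> de se; have [a ra] := size2_root se.
  by have := cubp_noroot a; rewrite (root_dvdp de ra).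
move: sd sd1; case sdE: (size d) => [|[|[|[|n]]]] // _ _.
- by exfalso; apply: (noroot_d d).
- exfalso; apply: (noroot_d (cubp %/ d)); first by rewrite -{2}(divpK dp) dvdp_mulIl.
  have e0 : cubp %/ d != 0.
    by apply: contraNneq cubp_neq0 => E; rewrite -(divpK dp) E mul0r.
  have := size_mul e0 d0; rewrite divpK // size_cubp sdE.
  by case: (size (cubp %/ d)) => [|[|[|k]]] //; rewrite !addnS.
Qed.

Lemma cubp_nozd (Y Z : {poly F}) : (size Y <= 3)%N -> (size Z <= 3)%N ->
  cubp %| Y * Z -> Y = 0 \/ Z = 0.
Proof.
move=> sY sZ dv; have [->|Y0] := eqVneq Y 0; first by left.
right; move: dv; rewrite Gauss_dvdpr ?cubp_coprime // => dZ.
apply/eqP; apply: contraTT dZ => Z0; apply/negP => dZ.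
by have := dvdp_leq Z0 dZ; rewrite size_cubp leqNgt ltnS sZ.
Qed.

End Cub.

End M_p2.
Import M_p2.

Module M_la1.
Import GRing.Theory.
Local Open Scope ring_scope.

Section Count.
Variable F : finFieldType.
Local Notation V := (V7 F).
Local Notation q := #|F|.

Fixpoint cntG (ks : seq {vspace V}) (X : seq V) : nat :=
  if ks is P :: ks' then
    (\sum_(w : V) ((w \in P) && (w \notin <<X>>%VS)) * cntG ks' (w :: X))%N
  else 1%N.

Fixpoint cntR (ks : seq {vspace V}) (n : nat) : nat :=
  if ks is P :: ks' then ((q ^ \dim P - q ^ n) * cntR ks' n.+1)%N else 1%N.

Lemma sum_bool_card (T : finType) (A : pred T) : (\sum_(t : T) (A t : nat))%N = #|A|.
Proof. by rewrite -sum1_card [RHS]big_mkcond; apply: eq_bigr => t _; rewrite unfold_in; case: (A t). Qed.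

Lemma card_diff (P U : {vspace V}) : (U <= P)%VS ->
  #|[pred w : V | (w \in P) && (w \notin U)]| = (q ^ \dim P - q ^ \dim U)%N.
Proof.
move=> UP; rewrite -!card_vspace -(cardID (mem U) (mem P)).
have -> : #|[predI mem P & mem U]| = #|U|.
  apply: eq_card => w; rewrite !inE /=.
  by case wU: (w \in U); rewrite ?andbT ?andbF // (subvP UP).
rewrite addKn; apply: eq_card => w; rewrite !inE /= andbC //.
Qed.

Lemma cntG_eq ks X : free X -> all (fun W => (<<X>> <= W)%VS) ks ->
  sorted (fun U W => (U <= W)%VS) ks -> cntG ks X = cntR ks (size X).
Proof.
elim: ks X => [//|P ks IH] X fX /= /andP [XP allX] sks.
have allPk : all (fun W => (P <= W)%VS) ks.
  by apply: order_path_min => //; apply: subv_trans.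
have sks' : sorted (fun U W => (U <= W)%VS) ks := path_sorted sks.
rewrite (eq_bigr (fun w => ((w \in P) && (w \notin <<X>>%VS)) * cntR ks (size X).+1)%N).
  rewrite -big_distrl /= (sum_bool_card _ [pred w : V | (w \in P) && (w \notin <<X>>%VS)]).
  by rewrite (card_diff _ _ XP) (eqP fX).
move=> w _; case H: ((w \in P) && (w \notin <<X>>%VS)); rewrite ?mul0n ?mul1n //.
move/andP: H => [wP wX]; rewrite IH //.
- by rewrite free_cons wX.
- apply/allP => W WK; rewrite span_cons subv_add -memvE.
  have PW := allP allPk W WK.
  by rewrite (subvP PW) //= (subv_trans XP PW).
Qed.

Definition Fr := (V * (V * (V * (V * (V * V)))))%type.
Definition fa1 (t : Fr) := t.1.
Definition fa2 (t : Fr) := t.2.1.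
Definition fa3 (t : Fr) := t.2.2.1.
Definition fb1 (t : Fr) := t.2.2.2.1.
Definition fb2 (t : Fr) := t.2.2.2.2.1.
Definition fb3 (t : Fr) := t.2.2.2.2.2.

Definition frame (u : V) (t : Fr) :=
  free [:: fb3 t; fb2 t; fb1 t; fa3 t; fa2 t; fa1 t; u].
Definition aspan (u : V) (t : Fr) := <<[:: fa3 t; fa2 t; fa1 t; u]>>%VS.

Lemma sum_pair (A B : finType) (G : A * B -> nat) :
  (\sum_(p : A * B) G p = \sum_(a : A) \sum_(b : B) G (a, b))%N.
Proof. by rewrite pair_bigA; apply: eq_bigr => -[a b]. Qed.

Lemma sum_andb (T : finType) (x : bool) (f : T -> bool) :
  (\sum_(b : T) (x && f b : nat) = x * \sum_(b : T) (f b : nat))%N.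
Proof. by case: x; rewrite ?mul1n ?mul0n // big1. Qed.

Lemma frame_cntG (u : V) (P : {vspace V}) :
  (\sum_(t : Fr) [&& (fa1 t \in P) && (fa1 t \notin <<[:: u]>>%VS),
     (fa2 t \in P) && (fa2 t \notin <<[:: fa1 t; u]>>%VS),
     (fa3 t \in P) && (fa3 t \notin <<[:: fa2 t; fa1 t; u]>>%VS),
     (fb1 t \notin <<[:: fa3 t; fa2 t; fa1 t; u]>>%VS),
     (fb2 t \notin <<[:: fb1 t; fa3 t; fa2 t; fa1 t; u]>>%VS) &
     (fb3 t \notin <<[:: fb2 t; fb1 t; fa3 t; fa2 t; fa1 t; u]>>%VS)])%N
  = cntG [:: P; P; P; fullv; fullv; fullv] [:: u].
Proof.
rewrite /= sum_pair /fa1 /fa2 /fa3 /fb1 /fb2 /fb3 /=; apply: eq_big => // a1 _.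
rewrite sum_andb; congr (_ * _)%N; rewrite sum_pair /=; apply: eq_big => // a2 _.
rewrite sum_andb; congr (_ * _)%N; rewrite sum_pair /=; apply: eq_big => // a3 _.
rewrite sum_andb; congr (_ * _)%N; rewrite sum_pair /=; apply: eq_big => // b1 _.
rewrite sum_andb memvf; congr (_ * _)%N; rewrite sum_pair /=; apply: eq_big => // b2 _.
rewrite sum_andb memvf; congr (_ * _)%N; apply: eq_big => // b3 _.
by rewrite memvf muln1.
Qed.

Lemma free_nil0 : free ([::] : seq V).
Proof. by rewrite /free span_nil dimv0. Qed.

Lemma cntG_eq1 ks (u : V) : u != 0 -> all (fun W => (<<[:: u]>> <= W)%VS) ks ->
  sorted (fun U W => (U <= W)%VS) ks -> cntG ks [:: u] = cntR ks 1.
Proof.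
move=> u0 h1 h2; rewrite cntG_eq //.
by rewrite free_cons span_nil memv0 u0 free_nil0.
Qed.

Lemma frame_free_eq u t : u != 0 -> frame u t =
  [&& fa1 t \notin <<[:: u]>>%VS, fa2 t \notin <<[:: fa1 t; u]>>%VS,
     fa3 t \notin <<[:: fa2 t; fa1 t; u]>>%VS,
     fb1 t \notin <<[:: fa3 t; fa2 t; fa1 t; u]>>%VS,
     fb2 t \notin <<[:: fb1 t; fa3 t; fa2 t; fa1 t; u]>>%VS &
     fb3 t \notin <<[:: fb2 t; fb1 t; fa3 t; fa2 t; fa1 t; u]>>%VS].
Proof.
move=> u0; rewrite /frame !free_cons span_nil memv0 u0 free_nil0 andbT.
by case: (_ \notin _); case: (_ \notin _); case: (_ \notin _);
   case: (_ \notin _); case: (_ \notin _); case: (_ \notin _).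
Qed.

Lemma dimV : \dim (fullv : {vspace V}) = 7%N.
Proof. by rewrite dimvf /dim /= mul1n. Qed.

Lemma count_frames u : u != 0 ->
  #|[pred t : Fr | frame u t]| = cntR [:: fullv; fullv; fullv; fullv; fullv; fullv] 1.
Proof.
move=> u0; rewrite -sum_bool_card.
rewrite -(cntG_eq1 _ _ u0).
- rewrite -(frame_cntG u fullv); apply: eq_bigr => t _.
  by rewrite inE /= frame_free_eq // !memvf.
- by rewrite /= !subvf.
- by rewrite /= !subvv.
Qed.

Lemma aspan_eq (u : V) (t : Fr) (P : {vspace V}) : free [:: fa3 t; fa2 t; fa1 t; u] -> u \in P -> \dim P = 4%N ->
  (aspan u t == P) = [&& fa1 t \in P, fa2 t \in P & fa3 t \in P].
Proof.
move=> fr uP dP; rewrite /aspan eqEdim (eqP fr) dP leqnn andbT.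
rewrite !span_cons !subv_add -!memvE span_nil sub0v uP !andbT.
by case: (fa1 t \in P); case: (fa2 t \in P); case: (fa3 t \in P).
Qed.

Lemma count_frames_P (u : V) (P : {vspace V}) : u != 0 -> u \in P -> \dim P = 4%N ->
  #|[pred t : Fr | frame u t && (aspan u t == P)]| = cntR [:: P; P; P; fullv; fullv; fullv] 1.
Proof.
move=> u0 uP dP; rewrite -sum_bool_card.
rewrite -(cntG_eq1 _ _ u0); first last.
- by rewrite /= !subvv subvf. 
- by rewrite /= !subvf span_cons span_nil addv0 -memvE uP.
rewrite -(frame_cntG u P); apply: eq_bigr => t _ /=.
case fr: (frame u t); last first.
  move: fr; rewrite frame_free_eq // => /negbT.
  by case: (_ \notin _); case: (_ \notin _); case: (_ \notin _);
   case: (_ \notin _); case: (_ \notin _); case: (_ \notin _);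
   rewrite ?andbF.
have fr' : free [:: fa3 t; fa2 t; fa1 t; u].
  by move: fr; rewrite /frame !free_cons => /and4P [_ _ _ ->].
rewrite aspan_eq //; move: fr; rewrite frame_free_eq // => /and5P [-> -> -> -> /andP [-> ->]].
by rewrite !andbT; case: (fa1 t \in P); case: (fa2 t \in P); case: (fa3 t \in P).
Qed.

End Count.

End M_la1.
Import M_la1.

Module M_la2.
Import GRing.Theory.
Local Open Scope ring_scope.

Arguments fa1 {F}. Arguments fa2 {F}. Arguments fa3 {F}. Arguments fb1 {F}. Arguments fb2 {F}. Arguments fb3 {F}.
Arguments frame {F}. Arguments aspan {F}.

Section Spread.
Variable F : finFieldType.
Local Notation V := (V7 F).
Local Notation Fr := (Fr F).
Variables c0 c1 c2 : F.
Hypothesis noroot : forall a : F, a ^+ 3 + c2 * a ^+ 2 + c1 * a + c0 != 0.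
Local Notation p := (@cubp F c0 c1 c2).

Definition polyx (x : F * F * F) : {poly F} := x.1.1%:P + x.1.2 *: 'X + x.2 *: 'X^2.
Definition Cc (x : F * F * F) (j k : nat) : F := (('X^j * polyx x) %% p)`_k.
Definition ap (x : F * F * F) (j : nat) (a : V) (t : Fr) : V :=
  a + Cc x j 0 *: fb1 t + Cc x j 1 *: fb2 t + Cc x j 2 *: fb3 t.
Definition phi (x : F * F * F) (t : Fr) : Fr :=
  (ap x 0 (fa1 t) t, (ap x 1 (fa2 t) t, (ap x 2 (fa3 t) t, (fb1 t, (fb2 t, fb3 t))))).
Definition swp (t : Fr) : Fr := (fb1 t, (fb2 t, (fb3 t, (fa1 t, (fa2 t, fa3 t))))).
Definition sp (u : V) (t : Fr) (i : option (F * F * F)) : {vspace V} :=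
  if i is Some x then aspan u (phi x t) else aspan u (swp t).

Lemma phi_inj x : injective (phi x).
Proof.
move=> [a1 [a2 [a3 [b1 [b2 b3]]]]] [a1' [a2' [a3' [b1' [b2' b3']]]]].
rewrite /phi /ap /fa1 /fa2 /fa3 /fb1 /fb2 /fb3 /= => -[].
move=> e1 e2 e3 eb1 eb2 eb3; subst b1' b2' b3'.
by move/addIr: e3 => /addIr /addIr ->; move/addIr: e2 => /addIr /addIr ->;
   move/addIr: e1 => /addIr /addIr ->.
Qed.

Lemma swp_inj : injective swp.
Proof.
move=> [a1 [a2 [a3 [b1 [b2 b3]]]]] [a1' [a2' [a3' [b1' [b2' b3']]]]].
by rewrite /swp /fa1 /fa2 /fa3 /fb1 /fb2 /fb3 /= => -[-> -> -> -> -> ->].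
Qed.

Lemma free_span_eq (L1 L2 : seq V) : <<L1>>%VS = <<L2>>%VS -> size L1 = size L2 ->
  free L1 = free L2.
Proof. by rewrite /free => -> ->. Qed.

Lemma span_subv7 (U : {vspace V}) (x1 x2 x3 x4 x5 x6 x7 : V) :
  x1 \in U -> x2 \in U -> x3 \in U -> x4 \in U -> x5 \in U -> x6 \in U -> x7 \in U ->
  (<<[:: x1; x2; x3; x4; x5; x6; x7]>> <= U)%VS.
Proof.
move=> h1 h2 h3 h4 h5 h6 h7.
by rewrite !span_cons !subv_add -!memvE h1 h2 h3 h4 h5 h6 h7 span_nil sub0v.
Qed.

Ltac mem_tac := repeat (apply: rpredD || apply: rpredZ || apply: rpredB);
  apply: memv_span; rewrite !inE eqxx ?orbT.

Ltac mem1 := apply: memv_span; rewrite !inE eqxx ?orbT.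
Ltac memZ := apply: rpredZ; mem1.

Lemma frame_phi u x t : frame u (phi x t) = frame u t.
Proof.
move: t => [a1 [a2 [a3 [b1 [b2 b3]]]]].
rewrite /frame; apply: free_span_eq => //; apply/eqP; rewrite eqEsubv.
rewrite /phi /fa1 /fa2 /fa3 /fb1 /fb2 /fb3 /=.
apply/andP; split; apply: span_subv7; rewrite /ap /fb1 /fb2 /fb3 /=; try by mem_tac.
- have e : a3 = (a3 + Cc x 2 0 *: b1 + Cc x 2 1 *: b2 + Cc x 2 2 *: b3)
            - Cc x 2 2 *: b3 - Cc x 2 1 *: b2 - Cc x 2 0 *: b1 by rewrite !addrK.
  by rewrite {1}e; apply: rpredB; [apply: rpredB; [apply: rpredB; [mem1|memZ]|memZ]|memZ].
- have e : a2 = (a2 + Cc x 1 0 *: b1 + Cc x 1 1 *: b2 + Cc x 1 2 *: b3)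
            - Cc x 1 2 *: b3 - Cc x 1 1 *: b2 - Cc x 1 0 *: b1 by rewrite !addrK.
  by rewrite {1}e; apply: rpredB; [apply: rpredB; [apply: rpredB; [mem1|memZ]|memZ]|memZ].
- have e : a1 = (a1 + Cc x 0 0 *: b1 + Cc x 0 1 *: b2 + Cc x 0 2 *: b3)
            - Cc x 0 2 *: b3 - Cc x 0 1 *: b2 - Cc x 0 0 *: b1 by rewrite !addrK.
  by rewrite {1}e; apply: rpredB; [apply: rpredB; [apply: rpredB; [mem1|memZ]|memZ]|memZ].
Qed.

Lemma frame_swp u t : frame u (swp t) = frame u t.
Proof.
move: t => [a1 [a2 [a3 [b1 [b2 b3]]]]].
rewrite /frame; apply: free_span_eq => //; apply/eqP; rewrite eqEsubv.
rewrite /swp /fa1 /fa2 /fa3 /fb1 /fb2 /fb3 /=.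
by apply/andP; split; apply: span_subv7; mem1.
Qed.

Lemma count_sp u P i :
  #|[pred t : Fr | frame u t && (sp u t i == P)]| =
  #|[pred t : Fr | frame u t && (aspan u t == P)]|.
Proof.
rewrite -!sum_bool_card; case: i => [x|].
- rewrite [RHS](reindex_inj (@phi_inj x)); apply: eq_bigr => t _.
  by rewrite !inE /= frame_phi.
- rewrite [RHS](reindex_inj swp_inj); apply: eq_bigr => t _.
  by rewrite !inE /= frame_swp.
Qed.

End Spread.

End M_la2.
Import M_la2.

Module M_la3.
Import GRing.Theory.
Local Open Scope ring_scope.
Arguments fa1 {F}. Arguments fa2 {F}. Arguments fa3 {F}. Arguments fb1 {F}. Arguments fb2 {F}. Arguments fb3 {F}.
Arguments frame {F}. Arguments aspan {F}.

Section Disj.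
Variable F : finFieldType.
Local Notation V := (V7 F).

Lemma span4P (w v3 v2 v1 u : V) : w \in <<[:: v3; v2; v1; u]>>%VS ->
  exists k3 k2 k1 k0, w = k3 *: v3 + k2 *: v2 + k1 *: v1 + k0 *: u.
Proof.
rewrite !span_cons span_nil addv0.
move=> /memv_addP [y /vlineP [k3 ->] [z /memv_addP [y2 /vlineP [k2 ->]
  [z2 /memv_addP [y3 /vlineP [k1 ->] [z3 /vlineP [k0 ->] ->]]] ->] ->]].
by exists k3, k2, k1, k0; rewrite !addrA.
Qed.

Lemma free7 (v6 v5 v4 v3 v2 v1 v0 : V) (k6 k5 k4 k3 k2 k1 k0 : F) :
  free [:: v6; v5; v4; v3; v2; v1; v0] ->
  k6 *: v6 + k5 *: v5 + k4 *: v4 + k3 *: v3 + k2 *: v2 + k1 *: v1 + k0 *: v0 = 0 ->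
  forall i, nth 0 [:: k6; k5; k4; k3; k2; k1; k0] i = 0.
Proof.
move=> fr E i; have [lt7|ge7] := ltnP i 7; last by rewrite nth_default.
pose X := in_tuple [:: v6; v5; v4; v3; v2; v1; v0].
have /freeP H : free X by [].
have := H (fun j : 'I_7 => nth 0 [:: k6; k5; k4; k3; k2; k1; k0] j).
rewrite !big_ord_recl big_ord0 /= addr0 !addrA => /(_ E (Ordinal lt7)) /=.
by [].
Qed.


Variables c0 c1 c2 : F.
Hypothesis noroot : forall a : F, a ^+ 3 + c2 * a ^+ 2 + c1 * a + c0 != 0.
Local Notation p := (@cubp F c0 c1 c2).
Local Notation polyx := (@polyx F).
Local Notation Cc := (@Cc F c0 c1 c2).
Local Notation ap := (@ap F c0 c1 c2).
Local Notation phi := (@phi F c0 c1 c2).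
Local Notation sp := (@sp F c0 c1 c2).

Lemma size_polyx x : (size (polyx x) <= 3)%N.
Proof.
rewrite /polyx; apply: (leq_trans (size_add _ _)); rewrite geq_max.
rewrite (leq_trans (size_scale_leq _ _)) ?size_polyXn // andbT.
apply: (leq_trans (size_add _ _)); rewrite geq_max.
rewrite (leq_trans (size_scale_leq _ _)) ?size_polyX // andbT.
by rewrite (leq_trans (size_polyC_leq1 _)).
Qed.

Lemma coef_polyx x : [/\ (polyx x)`_0 = x.1.1, (polyx x)`_1 = x.1.2 & (polyx x)`_2 = x.2].
Proof.
by rewrite /polyx !coefD !coefZ !coefC !coefX !coefXn /= !mulr0 !mulr1 !add0r !addr0.
Qed.

Lemma modcoef (k1 k2 k3 : F) x y m :
  ((polyx (k1, k2, k3) * (polyx x - polyx y)) %% p)`_m =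
  k1 * (Cc x 0 m - Cc y 0 m) + k2 * (Cc x 1 m - Cc y 1 m) + k3 * (Cc x 2 m - Cc y 2 m).
Proof.
have -> : polyx (k1, k2, k3) * (polyx x - polyx y) =
  k1 *: ('X^0 * polyx x) + k2 *: ('X^1 * polyx x) + k3 *: ('X^2 * polyx x)
  - (k1 *: ('X^0 * polyx y) + k2 *: ('X^1 * polyx y) + k3 *: ('X^2 * polyx y)).
  rewrite /polyx /= -!mul_polyC expr0 expr1; ring.
by rewrite /Cc !(modpD, modpN, modpZl) !(coefD, coefN, coefZ); ring.
Qed.


Lemma polyx_inj : injective polyx.
Proof.
move=> [[x0 x1] x2] [[y0 y1] y2] E.
have [a0 a1 a2] := coef_polyx (x0, x1, x2); have [b0 b1 b2] := coef_polyx (y0, y1, y2).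
by move: a0 a1 a2 b0 b1 b2; rewrite E /= => -> -> -> <- <- <-.
Qed.

Lemma mod_zero (r : {poly F}) : (forall m, (m < 3)%N -> (r %% p)`_m = 0) -> r %% p = 0.
Proof.
move=> H; apply/polyP => m; rewrite coef0.
have [lt3|ge3] := ltnP m 3; first exact: H.
apply: nth_default; apply: leq_trans ge3.
by have := ltn_modp r p; rewrite cubp_neq0 size_cubp ltnS => ->.
Qed.

Lemma key_xy (k1 k2 k3 : F) x y :
  x != y ->
  (forall m, (m < 3)%N -> k1 * (Cc x 0 m - Cc y 0 m) + k2 * (Cc x 1 m - Cc y 1 m)
                         + k3 * (Cc x 2 m - Cc y 2 m) = 0) ->
  [/\ k1 = 0, k2 = 0 & k3 = 0].
Proof.
move=> xy H.
have M : (polyx (k1, k2, k3) * (polyx x - polyx y)) %% p = 0.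
  by apply: mod_zero => m lt3; rewrite modcoef H.
move/modp_eq0P: M => /cubp_nozd [].
- exact: noroot.
- exact: size_polyx.
- apply: (leq_trans (size_add _ _)); rewrite geq_max size_polyx size_opp size_polyx //.
- move=> Y0; have [] := coef_polyx (k1, k2, k3); rewrite Y0 !coef0 /=.
  by move=> <- <- <-.
- by move/eqP; rewrite subr_eq0 => /eqP /polyx_inj E; move: xy; rewrite E eqxx.
Qed.


Lemma sp_some u t x w : w \in sp u t (Some x) ->
  exists k3 k2 k1 k0, w = k3 *: ap x 2 (fa3 t) t + k2 *: ap x 1 (fa2 t) t
                        + k1 *: ap x 0 (fa1 t) t + k0 *: u.
Proof. by move/span4P. Qed.

Lemma sp_none u t w : w \in sp u t None ->
  exists k3 k2 k1 k0, w = k3 *: fb3 t + k2 *: fb2 t + k1 *: fb1 t + k0 *: u.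
Proof. by move/span4P. Qed.

Lemma sp_disj_sn u t x w : frame u t -> w \in sp u t (Some x) -> w \in sp u t None ->
  w \in <[u]>%VS.
Proof.
move: t => [a1 [a2 [a3 [b1 [b2 b3]]]]] fr.
move=> /sp_some [k3 [k2 [k1 [k0 e1]]]] /sp_none [l3 [l2 [l1 [l0 e2]]]].
move: e1 e2; rewrite /ap /fa1 /fa2 /fa3 /fb1 /fb2 /fb3 /= => e1 e2.
have E : (k1 * Cc x 0 2 + k2 * Cc x 1 2 + k3 * Cc x 2 2 - l3) *: b3
       + (k1 * Cc x 0 1 + k2 * Cc x 1 1 + k3 * Cc x 2 1 - l2) *: b2
       + (k1 * Cc x 0 0 + k2 * Cc x 1 0 + k3 * Cc x 2 0 - l1) *: b1
       + k3 *: a3 + k2 *: a2 + k1 *: a1 + (k0 - l0) *: u = 0.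
  apply: (etrans _ (subrr w)); rewrite {1}e1 e2.
  by apply/rowP => i; rewrite !mxE; ring.
have H := free7 _ _ _ _ _ _ _ _ _ _ _ _ _ _ fr E.
have h3 := H 3%N; have h4 := H 4%N; have h5 := H 5%N; move: h3 h4 h5 => /= h3 h4 h5.
by rewrite e1 h3 h4 h5 !scale0r !addr0 ?add0r memvZ // memv_line.
Qed.


Lemma sp_disj_ss u t x y w : frame u t -> x != y -> w \in sp u t (Some x) ->
  w \in sp u t (Some y) -> w \in <[u]>%VS.
Proof.
move: t => [a1 [a2 [a3 [b1 [b2 b3]]]]] fr xy.
move=> /sp_some [k3 [k2 [k1 [k0 e1]]]] /sp_some [l3 [l2 [l1 [l0 e2]]]].
move: e1 e2; rewrite /ap /fa1 /fa2 /fa3 /fb1 /fb2 /fb3 /= => e1 e2.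
have E : (k1 * Cc x 0 2 + k2 * Cc x 1 2 + k3 * Cc x 2 2
          - (l1 * Cc y 0 2 + l2 * Cc y 1 2 + l3 * Cc y 2 2)) *: b3
       + (k1 * Cc x 0 1 + k2 * Cc x 1 1 + k3 * Cc x 2 1
          - (l1 * Cc y 0 1 + l2 * Cc y 1 1 + l3 * Cc y 2 1)) *: b2
       + (k1 * Cc x 0 0 + k2 * Cc x 1 0 + k3 * Cc x 2 0
          - (l1 * Cc y 0 0 + l2 * Cc y 1 0 + l3 * Cc y 2 0)) *: b1
       + (k3 - l3) *: a3 + (k2 - l2) *: a2 + (k1 - l1) *: a1 + (k0 - l0) *: u = 0.
  apply: (etrans _ (subrr w)); rewrite {1}e1 e2.
  by apply/rowP => i; rewrite !mxE; ring.
have H := free7 _ _ _ _ _ _ _ _ _ _ _ _ _ _ fr E.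
have h0 := H 0%N; have h1 := H 1%N; have h2 := H 2%N.
have h3 := H 3%N; have h4 := H 4%N; have h5 := H 5%N.
move: h0 h1 h2 h3 h4 h5 => /= h0 h1 h2 /eqP h3 /eqP h4 /eqP h5.
move: h3 h4 h5; rewrite !subr_eq0 => /eqP el3 /eqP el2 /eqP el1.
subst l1 l2 l3.
have [z1 z2 z3] : [/\ k1 = 0, k2 = 0 & k3 = 0].
  apply: (@key_xy k1 k2 k3 x y xy) => m; case: m => [|[|[|m]]] // _.
  - by rewrite -h2; ring.
  - by rewrite -h1; ring.
  - by rewrite -h0; ring.
by rewrite e1 z1 z2 z3 !scale0r !add0r memvZ // memv_line.
Qed.

Lemma sp_disj u t i j w : frame u t -> i != j -> w \in sp u t i -> w \in sp u t j ->
  w \in <[u]>%VS.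
Proof.
move=> fr; case: i => [x|]; case: j => [y|] //.
- by rewrite (inj_eq (@Some_inj _)); apply: sp_disj_ss.
- by move=> _; apply: sp_disj_sn.
- by move=> _ h1 h2; apply: (@sp_disj_sn _ _ _ _ fr h2 h1).
Qed.

End Disj.

End M_la3.
Import M_la3.

Module M_ar.
Import GRing.Theory Num.Theory.

Definition P52 (q : nat) := (q^6 + q^5 + 2*q^4 + 2*q^3 + 2*q^2 + q + 1)%N.

Lemma expleq q a b : (0 < q)%N -> (a <= b)%N -> (q ^ a <= q ^ b)%N.
Proof. by move=> q0 ab; rewrite leq_pexp2l. Qed.

Lemma gauss52E q : (1 < q)%N -> gauss52 q = P52 q.
Proof.
move=> q1; have q0 : (0 < q)%N by apply: ltnW.
rewrite /gauss52.
have -> : ((q ^ 5 - 1) * (q ^ 4 - 1) = P52 q * ((q ^ 2 - 1) * (q - 1)))%N.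
  apply/eqP; rewrite -(eqr_nat int) /P52 !natrM !natrB ?natrD ?natrM ?natrX;
    try by rewrite expn_gt0 q0.
  - by apply/eqP; ring.
  - by apply: ltnW.
rewrite mulnK // muln_gt0 !subn_gt0 q1 andbT.
by rewrite (leq_trans q1) // -{1}(expn1 q) leq_pexp2l.
Qed.

Lemma key_ident q : (0 < q)%N ->
  ((q^7 - q^1) * (q^7 - q^2) * (q^7 - q^3) =
   (q^3 + 1) * ((q^4 - q^1) * (q^4 - q^2) * (q^4 - q^3)) * P52 q)%N.
Proof.
move=> q0; apply/eqP; rewrite -(eqr_nat int) /P52 !natrM !natrB ?natrD ?natrM ?natrX;
  try by apply: expleq.
by apply/eqP; ring.
Qed.

Lemma arithB q y xi : (1 < q)%N ->
  (y * ((q ^ 3).+1 * ((q^4 - q^1) * ((q^4 - q^2) * ((q^4 - q^3) * ((q^7 - q^4) * ((q^7 - q^5) * ((q^7 - q^6) * 1)))))))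
   <= ((q^7 - q^1) * ((q^7 - q^2) * ((q^7 - q^3) * ((q^7 - q^4) * ((q^7 - q^5) * ((q^7 - q^6) * 1)))))) * xi)%N ->
  (y <= gauss52 q * xi)%N.
Proof.
move=> q1; have q0 : (0 < q)%N by apply: ltnW.
have pos a b : (b < a)%N -> (0 < q ^ a - q ^ b)%N by move=> ba; rewrite subn_gt0 ltn_exp2l.
set A := ((q^4 - q^1) * (q^4 - q^2) * (q^4 - q^3))%N.
set Z := ((q^7 - q^4) * (q^7 - q^5) * (q^7 - q^6))%N.
have -> : ((q^7 - q^1) * ((q^7 - q^2) * ((q^7 - q^3) * ((q^7 - q^4) * ((q^7 - q^5) * ((q^7 - q^6) * 1))))) =
   (q^7 - q^1) * (q^7 - q^2) * (q^7 - q^3) * Z)%N by rewrite /Z muln1 !mulnA.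
rewrite key_ident // -gauss52E //.
have -> : ((q ^ 3).+1 * ((q^4 - q^1) * ((q^4 - q^2) * ((q^4 - q^3) * ((q^7 - q^4) * ((q^7 - q^5) * ((q^7 - q^6) * 1)))))) = (q^3 + 1) * A * Z)%N.
  by rewrite /A /Z muln1 addn1 !mulnA.
have -> : ((q ^ 3 + 1) * A * gauss52 q * Z * xi = (gauss52 q * xi) * ((q ^ 3 + 1) * A * Z))%N.
  by ring.
rewrite leq_pmul2r //.
by rewrite !muln_gt0 addn1 /= !pos.
Qed.

Lemma arithA q c m : (1 < q)%N -> ((q - 1) * c <= (q ^ 3 - 1) * m)%N ->
  (c <= (q ^ 2 + q + 1) * m)%N.
Proof.
move=> q1 H.
have E : (q ^ 3 - 1 = (q - 1) * (q ^ 2 + q + 1))%N.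
  apply/eqP; rewrite -(eqr_nat int) !natrM !natrB ?natrD ?natrX ?expn_gt0 ?(ltnW q1) //.
  by apply/eqP; ring.
by move: H; rewrite E -mulnA leq_pmul2l // subn_gt0.
Qed.

End M_ar.
Import M_ar.

Module M_la4.
Import GRing.Theory.
Local Open Scope ring_scope.
Arguments fa1 {F}. Arguments fa2 {F}. Arguments fa3 {F}. Arguments fb1 {F}. Arguments fb2 {F}. Arguments fb3 {F}.
Arguments frame {F}. Arguments aspan {F}.

Section Main.
Variable F : finFieldType.
Local Notation V := (V7 F).
Local Notation q := #|F|.

Lemma inter (C : seq (flag F)) (E : {vspace V}) (u : V) f1 f2 :
  kneser_independent C -> u \in E -> f1 \in C -> f2 \in C ->
  (f1.1 :&: E == 0)%VS -> (f2.1 :&: E == 0)%VS ->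
  exists2 w, w \in (f1.2 :&: f2.2)%VS & w \notin <[u]>%VS.
Proof.
case=> _ /allP allF adj uE f1C f2C e1 e2.
have /and3P [d11 d12 s1] := allF f1 f1C.
have /and3P [d21 d22 s2] := allF f2 f2C.
have help (g1 g2 : flag F) : (g1.1 :&: E == 0)%VS -> (g1.1 <= g1.2)%VS ->
    (g1.1 :&: g2.2 != 0)%VS -> exists2 w, w \in (g1.2 :&: g2.2)%VS & w \notin <[u]>%VS.
  move=> gE gs gn; exists (vpick (g1.1 :&: g2.2)%VS).
    have := memv_pick (g1.1 :&: g2.2)%VS; rewrite !memv_cap => /andP [h1 h2].
    by rewrite h2 (subvP gs).
  apply/negP => wu.
  have wE : vpick (g1.1 :&: g2.2)%VS \in E by rewrite (subvP _ _ wu) // -memvE.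
  have := memv_pick (g1.1 :&: g2.2)%VS; rewrite memv_cap => /andP [h1 _].
  have : vpick (g1.1 :&: g2.2)%VS \in (g1.1 :&: E)%VS by rewrite memv_cap h1.
  by rewrite (eqP gE) memv0 vpick0 (negPf gn).
case e: (f1.2 == f2.2).
  have : ~~ (f1.2 <= <[u]>)%VS.
    apply/negP => /dimvS; rewrite (eqP d12) dim_vline.
    by case: (u != 0).
  move/subvPn => [w w1 wu]; exists w => //; by rewrite memv_cap w1 -(eqP e) w1.
have f12 : f1 != f2 by apply: contraFneq e => ->.
have := adj f1 f2 f1C f2C; rewrite /kneser_adj f12 /=.
case: (boolP (f1.1 :&: f2.2 == 0)%VS) => /= h.
- move=> h2; have [w w1 w2] := help f2 f1 e2 s2 h2.
  by exists w => //; move: w1; rewrite !memv_cap andbC.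
- by move=> _; apply: help.
Qed.


Lemma count_sum (T : Type) (a : pred T) (s : seq T) :
  count a s = (\sum_(x <- s) (a x : nat))%N.
Proof. by rewrite -sum1_count big_mkcond; apply: eq_bigr => x _; case: (a x). Qed.

Lemma sum_cond_card (T : finType) (P b : pred T) :
  (\sum_(t | P t) (b t : nat))%N = #|[pred t | P t && b t]|.
Proof.
rewrite -sum_bool_card big_mkcond; apply: eq_bigr => t _.
by rewrite inE; case: (P t).
Qed.

Lemma sum_seq_const (T : Type) (s : seq T) (c : nat) : (\sum_(x <- s) c)%N = (size s * c)%N.
Proof. by elim: s => [|x s IH]; rewrite ?big_nil ?big_cons ?IH ?mulSn. Qed.

Section StepB.
Variables (C : seq (flag F)) (xi : nat) (E : {vspace V}) (u : V).
Hypothesis indep : kneser_independent C.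
Hypothesis hxi : forall S : {vspace V}, \dim S = 4%N -> (count (fun f : flag F => f.2 == S) C <= xi)%N.
Hypothesis u0 : u != 0.
Hypothesis uE : u \in E.
Variables c0 c1 c2 : F.
Hypothesis noroot : forall a : F, a ^+ 3 + c2 * a ^+ 2 + c1 * a + c0 != 0.
Local Notation sp := (@sp F c0 c1 c2).

Definition pY (f : flag F) := (f.1 :&: E == 0)%VS && (u \in f.2).
Local Notation Y := [seq f <- C | pY f].

Lemma Y_dim f : f \in Y -> \dim f.2 = 4%N.
Proof.
rewrite mem_filter => /andP [_ fC]; case: indep => _ /allP allF _.
by have /and3P [_ /eqP -> _] := allF f fC.
Qed.

Lemma claim1 t : frame u t ->
  (\sum_(i : option (F * F * F)) count (fun f : flag F => sp u t i == f.2) Y <= xi)%N.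
Proof.
move=> fr.
case: (pickP (fun i => 0 < count (fun f : flag F => sp u t i == f.2) Y)%N) => [i0 Hi0 | H0];
  last first.
  by rewrite big1 // => i _; apply/eqP; rewrite -leqn0 leqNgt H0.
have [f1 f1Y e1] : exists2 f1, f1 \in Y & sp u t i0 == f1.2.
  by move: Hi0; rewrite -has_count => /hasP [f1 h1 h2]; exists f1.
rewrite (bigD1 i0) //= big1 ?addn0.
  rewrite count_filter; apply: (@leq_trans _ _ _ _ (hxi _ (Y_dim _ f1Y))).
  by apply: sub_count => f /andP [/eqP <- _]; rewrite (eqP e1).
move=> i ii0; apply/eqP; rewrite -leqn0 leqNgt; apply/negP.
rewrite -has_count => /hasP [f2 f2Y e2].
move: (f1Y) (f2Y); rewrite !mem_filter => /andP [/andP [f1E _] f1C] /andP [/andP [f2E _] f2C].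
have [w] := @inter _ _ _ _ _ indep uE f1C f2C f1E f2E.
rewrite memv_cap -(eqP e1) -(eqP e2) => /andP [w1 w2].
by rewrite (@sp_disj F c0 c1 c2 noroot u t i0 i w fr _ w1 w2) // eq_sym.
Qed.


Definition Kf := ((q^4 - q^1) * ((q^4 - q^2) * ((q^4 - q^3) * ((q^7 - q^4) * ((q^7 - q^5) * ((q^7 - q^6) * 1))))))%N.
Definition Nf := ((q^7 - q^1) * ((q^7 - q^2) * ((q^7 - q^3) * ((q^7 - q^4) * ((q^7 - q^5) * ((q^7 - q^6) * 1))))))%N.

Lemma claim2 :
  (\sum_(t | frame u t) \sum_(i : option (F * F * F)) count (fun f : flag F => sp u t i == f.2) Y)%N
  = (size Y * ((q ^ 3).+1 * Kf))%N.
Proof.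
rewrite (eq_bigr (fun t => \sum_(f <- Y) \sum_(i : option (F * F * F)) (sp u t i == f.2 : nat))%N);
  last by move=> t _; rewrite (eq_bigr (fun i => \sum_(f <- Y) (sp u t i == f.2 : nat))%N);
  [rewrite exchange_big | move=> i _; rewrite count_sum].
rewrite exchange_big /= -sum_seq_const big_seq [RHS]big_seq; apply: eq_bigr => f fY.
rewrite exchange_big /=.
rewrite (eq_bigr (fun _ => Kf)); first by rewrite sum_nat_const card_option !card_prod !expnS expn0 muln1 !mulnA.
move=> i _; rewrite sum_cond_card (@count_sp F c0 c1 c2 u f.2 i).
have df : \dim f.2 = 4%N := Y_dim _ fY.
move: fY; rewrite mem_filter => /andP [/andP [_ uf] fC].
by rewrite (@count_frames_P F u f.2 u0 uf df) /= !dimV df.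
Qed.


Lemma stepB_main : (count pY C <= gauss52 q * xi)%N.
Proof.
rewrite -size_filter; apply: (@arithB _ _ _ (finNzRing_gt1 F)).
rewrite -[X in (X <= _)%N]claim2 -/Nf.
apply: (@leq_trans (\sum_(t | frame u t) xi)%N); first by apply: leq_sum => t fr; apply: claim1.
rewrite sum_nat_const; apply: eq_leq; congr (_ * _)%N.
by rewrite (@count_frames F u u0) /= !dimV.
Qed.

End StepB.

End Main.

End M_la4.
Import M_la4.

Module M_main.
Import GRing.Theory.

Lemma card_nz (F : finFieldType) (U : {vspace V7 F}) :
  #|[pred v : V7 F | (v \in U) && (v != 0%R)]| = (#|F| ^ \dim U - 1)%N.
Proof.
rewrite -card_vspace [in RHS](cardD1 0%R) mem0v add1n subSS subn0.
by apply: eq_card => v; rewrite !inE andbC.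
Qed.

End M_main.
Import M_main.
Theorem lemma3p3 (F : finFieldType) (C : seq (flag F)) (xi : nat) :
  kneser_independent C ->
  (forall S : {vspace V7 F}, \dim S = 4 -> count (fun f : flag F => f.2 == S) C <= xi) ->
  forall E S : {vspace V7 F}, (E, S) \in C ->
  count (fun f : flag F => (f.1 :&: E == 0)%VS && (f.2 :&: E != 0)%VS) C
    <= (#|F| ^ 2 + #|F| + 1) * gauss52 #|F| * xi.
Proof.
move=> indep hxi E S ESC.
have dE : \dim E = 3.
  by case: indep => _ /allP allF _; have /and3P [/eqP -> _ _] := allF _ ESC.
have [[[c0 c1] c2] noroot] := exists_cubic F.
set pX := fun f : flag F => _.
rewrite -mulnA; apply: (@arithA _ _ _ (finNzRing_gt1 F)).
rewrite -dE -card_nz -sum_nat_const.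
apply: (@leq_trans (\sum_(v | (v \in E) && (v != 0%R)) count (fun f => pX f && (v \in f.2)) C)).
  rewrite count_sum big_distrr /=.
  rewrite (eq_bigr (fun v => \sum_(f <- C) (pX f && (v \in f.2) : nat))); last first.
    by move=> v _; rewrite count_sum.
  rewrite exchange_big /=; apply: leq_sum => f _.
  case pf: (pX f); last by rewrite muln0.
  rewrite muln1 (eq_bigr (fun v => (v \in f.2 : nat))) // sum_cond_card.
  have : (f.2 :&: E != 0)%VS by move: pf => /andP [].
  rewrite -dimv_eq0 -lt0n => d0.
  have -> : #|[pred t | (t \in E) && (t != 0%R) && (t \in f.2)]| =
            #|[pred v : V7 F | (v \in (f.2 :&: E)%VS) && (v != 0%R)]|.
    by apply: eq_card => v; rewrite !inE memv_cap andbC andbA.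
  rewrite card_nz leq_sub2r // -{1}(expn1 #|F|) leq_pexp2l //.
  by apply: ltnW; apply: finNzRing_gt1.
apply: leq_sum => v /andP [vE v0].
apply: (leq_trans _ (@stepB_main F C xi E v indep hxi v0 vE c0 c1 c2 noroot)).
by apply: sub_count => f /andP [/andP [h _] h2]; rewrite /pY h h2.
Qed.
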